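(* Let $m$ be a positive integer and let $S_1,\dots,S_{k-1}$ be pairwise disjoint subsets of $\mathbb{F}_2^m$, and let $d=\dim(\bigcup_iS_i)$. Then $\langle\mathcal{X}^4_{\overline{(S_1,\dots,S_{k-1})}}\rangle\le 2^{2dm+8d^2}B^{2^{d+2}}$, where $B=\max_{i,\epsilon,z}|\mathcal{X}^{(i)}(\epsilon,z)|$.
   Context: Consider a BMS channel with finitely many noise levels: for each input bit $X_x$, the channel independently draws $\epsilon_x\in[0,1/2]$ from a fixed distribution with finite support, draws $Z_x\in\mathbb{F}_2$ equal to $1$ with probability $\epsilon_x$, and outputs $(\epsilon_x,X_x+Z_x)$. Let $k$ be the number of possible pairs $(\epsilon_x,Z_x)$ and $\nu$ their joint distribution. Let $\mathcal{X}^{(0)},\dots,\mathcal{X}^{(k-1)}$ be functions from these pairs to $\mathbb{R}$ that are orthonormal in $L^2(\nu)$, with $\mathcal{X}^{(0)}\equiv1$. For pairwise disjoint $S_1,\dots,S_{k-1}\subseteq\mathbb{F}_2^m$, $\mathcal{X}_{(S_1,\dots,S_{k-1})}(\epsilon,Z)=\prod_{i=1}^{k-1}\prod_{x\in S_i}\mathcal{X}^{(i)}(\epsilon_x,Z_x)$, a function of $(\epsilon_x,Z_x)_{x\in\mathbb{F}_2^m}$. $\langle g\rangle$ is the expectation of $g$ when $(\epsilon_x,Z_x)_{x\in\mathbb{F}_2^m}$ are i.i.d. with law $\nu$. $\overline{(S_1,\dots,S_{k-1})}$ is the set of distinct tuples $(\pi(S_1),\dots,\pi(S_{k-1}))$ over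 invertible linear maps $\pi$ of $\mathbb{F}_2^m$, and $\mathcal{X}_{\overline{(S_1,\dots,S_{k-1})}}$ is the sum of $\mathcal{X}_{T}$ over tuples $T$ in this set. $\dim$ denotes the dimension of the linear span in $\mathbb{F}_2^m$. *)

(* Defs.v *)
From HB Require Import structures.
From mathcomp Require Import all_boot all_order all_algebra.
Set Implicit Arguments. Unset Strict Implicit. Unset Printing Implicit Defensive.
Import Order.TTheory GRing.Theory Num.Theory.
Local Open Scope ring_scope.

Notation F2m m := 'rV['F_2]_m.

(* joint law nu of the pair (eps_x, Z_x): noise level labels l : L with
   value eps l, probability p l; Z = true (i.e. 1) with probability eps l. *)
Definition nu (R : realFieldType) (L : finType) (eps p : L -> R) (q : L * bool) : R :=
  p q.1 * (if q.2 then eps q.1 else 1 - eps q.1).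

Definition iid_expect (R : realFieldType) (L : finType) (eps p : L -> R) (m : nat)
  (g : {ffun F2m m -> L * bool} -> R) : R :=
  \sum_(w : {ffun F2m m -> L * bool}) (\prod_(x : F2m m) nu eps p (w x)) * g w.

(* X_{(T_1,..,T_{k-1})}; T j corresponds to S_{j+1}, paired with X^(j+1) *)
Definition X_tuple (R : realFieldType) (L : finType) (X : nat -> L * bool -> R)
  (m n : nat) (T : {ffun 'I_n -> {set F2m m}}) (w : {ffun F2m m -> L * bool}) : R :=
  \prod_(j < n) \prod_(x in T j) X j.+1 (w x).

Definition orbit_tuples (m n : nat) (S : {ffun 'I_n -> {set F2m m}}) :
  {set {ffun 'I_n -> {set F2m m}}} :=
  [set [ffun j => (fun x : F2m m => x *m A) @: S j] | A in [pred A : 'M['F_2]_m | A \in unitmx]].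

Definition X_orbit (R : realFieldType) (L : finType) (X : nat -> L * bool -> R)
  (m n : nat) (S : {ffun 'I_n -> {set F2m m}}) (w : {ffun F2m m -> L * bool}) : R :=
  \sum_(T in orbit_tuples S) X_tuple X T w.

Definition span_dim (m : nat) (U : {set F2m m}) : nat := \dim (<<enum U>>%VS).

(* Main.v *)
Require Import Defs.
From HB Require Import structures.
From mathcomp Require Import all_boot all_order all_algebra.
From mathcomp Require Import zify ring lra.
Set Implicit Arguments. Unset Strict Implicit. Unset Printing Implicit Defensive.
Import Order.TTheory GRing.Theory Num.Theory.
Local Open Scope ring_scope.

Notation F := 'F_2.

Definition fsum (m d : nat) (M : 'I_4 -> 'M[F]_(d,m)) (c : {ffun 'I_4 -> 'rV[F]_d}) : 'rV[F]_m :=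
  \sum_t c t *m M t.

Fact fsum_lin m d M : linear (@fsum m d M).
Proof.
move=> a c1 c2; rewrite /fsum scaler_sumr -big_split /=; apply: eq_bigr => t _.
by rewrite !ffunE mulmxDl scalemxAl.
Qed.

HB.instance Definition _ m d M := GRing.isSemilinear.Build F {ffun 'I_4 -> 'rV[F]_d} 'rV[F]_m _ (@fsum m d M)
    (GRing.semilinear_linear (@fsum_lin m d M)).

Lemma dim_dom d : \dim (fullv : {vspace {ffun 'I_4 -> 'rV[F]_d}}) = (4 * d)%N.
Proof.
rewrite dimvf /dim /= card_ord.
have -> : dim (matrix_matrix__canonical__vector_Vector F 1 d) = d.
  by rewrite dim_matrix mul1r.
by [].
Qed.

Definition Bm m (U : {set 'rV[F]_m}) : 'M[F]_(\dim <<enum U>>%VS, m) :=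
  \matrix_(i < \dim <<enum U>>%VS) (vbasis <<enum U>>%VS)`_i.

Definition cx m (U : {set 'rV[F]_m}) (x : 'rV[F]_m) : 'rV[F]_(\dim <<enum U>>%VS) :=
  \row_i coord (vbasis <<enum U>>%VS) i x.

Lemma cxE m (U : {set 'rV[F]_m}) x : x \in <<enum U>>%VS -> cx U x *m Bm U = x.
Proof.
move=> hx; rewrite mulmx_sum_row {2}(coord_vbasis hx); apply: eq_bigr => i _.
by rewrite !mxE rowK.
Qed.

Lemma rowBm m (U : {set 'rV[F]_m}) i : row i (Bm U) = (vbasis <<enum U>>%VS)`_i.
Proof. by rewrite rowK. Qed.
Lemma ffun_scaleE (K : fieldType) (I : finType) (V : vectType K) (a : K) (f : {ffun I -> V}) u :
  (a *: f) u = a *: f u.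
Proof. by rewrite ffunE. Qed.

Lemma proj_span (K : fieldType) (I : finType) (V : vectType K) (Rl : seq {ffun I -> V}) r u :
  r \in <<Rl>>%VS -> r u \in <<map (fun x : {ffun I -> V} => x u) Rl>>%VS.
Proof.
move=> /(coord_span (X := in_tuple Rl)) ->.
rewrite sum_ffunE; apply: memv_suml => i _.
rewrite ffun_scaleE; apply: memvZ; apply: memv_span.
apply/mapP; exists (in_tuple Rl)`_i => //; exact: mem_nth.
Qed.

Lemma halfsum (K : fieldType) (I : finType) (V : vectType K) (Rl : seq {ffun I -> V}) :
  (forall r, r \in Rl -> #|[pred u | r u != 0%R]| <= 2)%N ->
  (\sum_(u : I) \dim <<map (fun x : {ffun I -> V} => x u) Rl>>%VS <= 2 * \dim <<Rl>>%VS)%N.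
Proof.
elim: Rl => [|r Rl IH] H.
  by rewrite big1 // => u _; rewrite /= span_nil dimv0.
have IH' := IH (fun x hx => H x (mem_behead (s := r :: Rl) hx)).
have Hr := H r (mem_head _ _).
case: (boolP (r \in <<Rl>>%VS)) => rin.
  rewrite span_cons (addv_idPr _); last by rewrite -memvE.
  apply: leq_trans IH'; apply: leq_sum => u _.
  rewrite /= span_cons (addv_idPr _) //; rewrite -memvE; exact: proj_span.
rewrite span_cons dimv_disjoint_sum; last first.
  apply/eqP; rewrite -subv0; apply/subvP => x /memv_capP [/vlineP [a ->] hx].
  rewrite memv0; case: (eqVneq a 0) => [-> | a0]; first by rewrite scale0r.
  move: hx => /(memvZ a^-1); rewrite scalerA mulVf // scale1r => h; by rewrite h in rin.
have r0 : r != 0.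
  by apply: contraNneq rin => ->; exact: mem0v.
rewrite dim_vline r0 /= mulnDr muln1.
have key : forall u, (\dim <<map (fun x : {ffun I -> V} => x u) (r :: Rl)>>%VS <= \dim <<map (fun x : {ffun I -> V} => x u) Rl>>%VS + (r u != 0%R))%N.
  move=> u; rewrite /= span_cons addnC.
  by rewrite (leq_trans (dimv_add_leqif _ _)) // dim_vline addnC.
have := @leq_sum I (index_enum I) xpredT _ _ (fun u _ => key u). move=> /leq_trans; apply.
rewrite big_split /= addnC leq_add //.
rewrite (eq_bigr (fun u => if r u != 0%R then 1 else 0)%N); last by move=> u _; case: (r u != 0%R).
by rewrite -big_mkcond sum1_card.
Qed.

Definition relv m (U : {set 'rV[F]_m}) (q : 'I_4 * 'I_4 * 'rV[F]_m * 'rV[F]_m) :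
  {ffun 'I_4 -> 'rV[F]_(\dim <<enum U>>%VS)} :=
  [ffun u => if u == q.1.1.1 then cx U q.1.2 else if u == q.1.1.2 then - cx U q.2 else 0].

Definition relcond m (U : {set 'rV[F]_m}) (A : 'I_4 -> 'M[F]_m) (q : 'I_4 * 'I_4 * 'rV[F]_m * 'rV[F]_m) :=
  [&& q.1.1.2 != q.1.1.1, q.1.2 \in U, q.2 \in U & q.1.2 *m A q.1.1.1 == q.2 *m A q.1.1.2].

Lemma arith_fin (a b c d : nat) : (4 * d <= 2 * a)%N -> (a <= b)%N -> (b + c = 4 * d)%N -> (c <= 2 * d)%N.
Proof. lia. Qed.

Lemma core m (U : {set 'rV[F]_m}) (A : 'I_4 -> 'M[F]_m) :
  (forall t x, x \in U -> exists s x', [/\ s != t, x' \in U & x *m A t = x' *m A s]) ->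
  exists Wv : {vspace 'rV[F]_m}, (\dim Wv <= 2 * \dim <<enum U>>%VS)%N /\
     forall t (i : 'I_(\dim <<enum U>>%VS)), (vbasis <<enum U>>%VS)`_i *m A t \in Wv.
Proof.
move=> H.
set d := \dim <<enum U>>%VS.
pose M := fun t => Bm U *m A t.
pose f := linfun (@fsum m d M).
exists (limg f); split; last first.
  move=> t i.
  have -> : (vbasis <<enum U>>%VS)`_i *m A t =
     f [ffun u => if u == t then delta_mx 0 i else 0].
    rewrite lfunE /= /fsum (bigD1 t) //= big1 ?addr0; last first.
      by move=> u /negbTE hu; rewrite ffunE hu mul0mx.
    by rewrite ffunE eqxx /M mulmxA -rowE rowBm.
  by apply: memv_img; exact: memvf.
pose Rl := [seq relv U q | q <- enum [pred q | relcond U A q]].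
have Rker : (<<Rl>> <= lker f)%VS.
  apply/span_subvP => r /mapP [q]; rewrite mem_enum => /and4P [hst hx hx' /eqP he] ->.
  rewrite memv_ker lfunE /= /fsum (bigD1 q.1.1.1) //= (bigD1 q.1.1.2) //= big1 ?addr0; last first.
    by move=> u /andP [/negbTE h1 /negbTE h2]; rewrite ffunE h1 h2 mul0mx.
  have hx0 : q.1.2 \in <<enum U>>%VS by apply: memv_span; rewrite mem_enum.
  have hx0' : q.2 \in <<enum U>>%VS by apply: memv_span; rewrite mem_enum.
  rewrite !ffunE eqxx (negbTE hst) eqxx /M !mulmxA mulNmx !cxE // he.
  by rewrite mulNmx subrr.
have Hsup : forall r, r \in Rl -> (#|[pred u | r u != 0%R]| <= 2)%N.
  move=> r /mapP [q _ ->].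
  apply: (@leq_trans #|[set q.1.1.1; q.1.1.2]|); last by rewrite cards2; case: (_ != _).
  apply: subset_leq_card; apply/subsetP => u; rewrite !inE ffunE.
  by case: (u == _); case: (u == _) => //; rewrite eqxx.
have Hhs := halfsum Hsup.
have Hproj : forall u, (d <= \dim <<map (fun x : {ffun 'I_4 -> 'rV[F]_d} => x u) Rl>>%VS)%N.
  move=> u.
  set S := <<_>>%VS.
  pose g := linfun (@mulmxr F 1 _ _ (Bm U)).
  have sub : (<<enum U>> <= g @: S)%VS.
    apply/span_subvP => x; rewrite mem_enum => hx.
    have [s [x' [hs hx' he]]] := H u x hx.
    have hq : relcond U A (((u, s), x), x') by rewrite /relcond /= hs hx hx' he eqxx.
    have -> : x = g (relv U (((u, s), x), x') u).
      by rewrite lfunE /= ffunE eqxx cxE //; apply: memv_span; rewrite mem_enum.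
    apply: memv_img; apply: memv_span; apply/mapP; exists (relv U (((u, s), x), x')) => //.
    by apply/mapP; exists (((u, s), x), x') => //; rewrite mem_enum.
  have := limg_ker_dim g S.
  have := dimvS sub.
  rewrite -/d; lia.
have : (\sum_(u : 'I_4) d <= \sum_(u : 'I_4) \dim <<map (fun x : {ffun 'I_4 -> 'rV[F]_d} => x u) Rl>>%VS)%N.
  by apply: leq_sum => u _; exact: Hproj.
rewrite sum_nat_const card_ord => H4.
have := limg_ker_dim f fullv.
rewrite capfv dim_dom.
have := dimvS Rker.
have H5 := leq_trans H4 Hhs. exact: arith_fin H5.
Qed.

Lemma cardF : #|F| = 2%N.
Proof. by rewrite card_Fp. Qed.

Lemma card_rV m : #|{: 'rV[F]_m}| = (2 ^ m)%N.
Proof. by rewrite card_mx cardF mul1n. Qed.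

Lemma card_vspace_le m (W : {vspace 'rV[F]_m}) (A : {set 'rV[F]_m}) :
  (forall x, x \in A -> x \in W) -> (#|A| <= 2 ^ \dim W)%N.
Proof.
move=> HA.
pose bb := vbasis W.
pose dec (c : {ffun 'I_(\dim W) -> F}) := \sum_k c k *: bb`_k.
have sub : A \subset dec @: setT.
  apply/subsetP => x hx; apply/imsetP; exists [ffun k => coord bb k x]; first by rewrite inE.
  by rewrite /dec {1}(coord_vbasis (HA x hx)); apply: eq_bigr => k _; rewrite ffunE.
apply: (leq_trans (subset_leq_card sub)); apply: (leq_trans (leq_imset_card _ _)).
by rewrite cardsT card_ffun cardF card_ord.
Qed.

Lemma G1 m (I : finType) (r : nat) (Vs : {set {ffun I -> 'rV[F]_m}}) :
 (forall v, v \in Vs -> exists Wv : {vspace 'rV[F]_m}, (\dim Wv <= r)%N /\ forall i, v i \in Wv) ->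
 (#|Vs| <= 2 ^ (m * r) * 2 ^ (r * #|I|))%N.
Proof.
move=> HV.
pose dec (p : {ffun 'I_r -> 'rV[F]_m} * {ffun I -> {ffun 'I_r -> F}}) : {ffun I -> 'rV[F]_m} :=
  [ffun i => \sum_(k < r) p.2 i k *: p.1 k].
have sub : Vs \subset dec @: setT.
  apply/subsetP => v hv; have [Wv [hdim hin]] := HV v hv.
  pose bb := vbasis Wv.
  pose cn i (k : nat) : F := if @insub nat (fun k => k < \dim Wv)%N _ k is Some k' then coord bb k' (v i) else 0.
  apply/imsetP; exists ([ffun k : 'I_r => bb`_k], [ffun i => [ffun k : 'I_r => cn i k]]); first by rewrite inE.
  apply/ffunP => i; rewrite ffunE /=.
  rewrite {1}(coord_vbasis (hin i)).
  have -> : \sum_(k < \dim Wv) coord bb k (v i) *: bb`_k = \sum_(k < \dim Wv) cn i k *: bb`_k.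
    by apply: eq_bigr => k _; rewrite /cn valK.
  rewrite (big_ord_widen _ (fun k => cn i k *: bb`_k) hdim) big_mkcond /=.
  apply: eq_bigr => k _; rewrite !ffunE.
  case: ifP => // hk; rewrite nth_default ?scaler0 // size_tuple; lia.
apply: (leq_trans (subset_leq_card sub)); apply: (leq_trans (leq_imset_card _ _)).
rewrite cardsT card_prod !card_ffun card_rV cardF !card_ord -!expnM.
by [].
Qed.

Definition Timg m n (S : {ffun 'I_n -> {set 'rV[F]_m}}) (A : 'M[F]_m) : {ffun 'I_n -> {set 'rV[F]_m}} :=
  [ffun j => (fun x : 'rV[F]_m => x *m A) @: S j].

Definition Apick m n (S : {ffun 'I_n -> {set 'rV[F]_m}}) (T : {ffun 'I_n -> {set 'rV[F]_m}}) : 'M[F]_m :=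
  odflt 1%:M [pick A : 'M[F]_m | (A \in unitmx) && (T == Timg S A)].

Lemma Apick_spec m n (S : {ffun 'I_n -> {set 'rV[F]_m}}) T :
  T \in orbit_tuples S -> Apick S T \in unitmx /\ T = Timg S (Apick S T).
Proof.
move=> /imsetP [A hA ->]; rewrite /Apick.
case: pickP => [B /andP [hB /eqP ->] | /(_ A)] //=.
by rewrite hA /= eqxx.
Qed.

Definition goodb m n (tau : {ffun 'I_4 -> {ffun 'I_n -> {set 'rV[F]_m}}}) : bool :=
  [forall x : 'rV[F]_m, forall t : 'I_4, forall j : 'I_n, (x \in tau t j) ==>
     [exists s : 'I_4, exists j' : 'I_n, ((s, j') != (t, j)) && (x \in tau s j')]].

Definition GoodSet m n (S : {ffun 'I_n -> {set 'rV[F]_m}}) :=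
  [set tau : {ffun 'I_4 -> {ffun 'I_n -> {set 'rV[F]_m}}} | [forall t, tau t \in orbit_tuples S] && goodb tau].

Lemma count_good m n (S : {ffun 'I_n -> {set 'rV[F]_m}})
  (Hdisj : forall i j, i != j -> [disjoint S i & S j]) :
  (#|GoodSet S| <= 2 ^ (2 * \dim <<enum (\bigcup_(j < n) S j)>>%VS * m + 8 * (\dim <<enum (\bigcup_(j < n) S j)>>%VS) ^ 2))%N.
Proof.
set U := \bigcup_(j < n) S j.
set d := \dim <<enum U>>%VS.
set b := vbasis <<enum U>>%VS.
pose vmap (tau : {ffun 'I_4 -> {ffun 'I_n -> {set 'rV[F]_m}}}) : {ffun 'I_4 * 'I_d -> 'rV[F]_m} :=
  [ffun p : 'I_4 * 'I_d => b`_p.2 *m Apick S (tau p.1)].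
have inj : {in GoodSet S &, injective vmap}.
  move=> t1 t2; rewrite !inE => /andP [/forallP h1 _] /andP [/forallP h2 _] he.
  apply/ffunP => t.
  have [_ e1] := Apick_spec (h1 t); have [_ e2] := Apick_spec (h2 t).
  rewrite e1 e2; apply/ffunP => j; rewrite !ffunE; apply: eq_in_imset => x hx.
  have hxW : x \in <<enum U>>%VS.
    by apply: memv_span; rewrite mem_enum; apply/bigcupP; exists j.
  rewrite (coord_vbasis hxW) !mulmx_suml; apply: eq_bigr => i _.
  rewrite -!scalemxAl; congr (_ *: _).
  by have := congr1 (fun f : {ffun 'I_4 * 'I_d -> 'rV[F]_m} => f (t, i)) he; rewrite /vmap !ffunE.
rewrite -(card_in_imset inj).
have HG : forall v, v \in vmap @: GoodSet S -> exists Wv : {vspace 'rV[F]_m}, (\dim Wv <= 2 * d)%N /\ forall i, v i \in Wv.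
  move=> v /imsetP [tau]; rewrite inE => /andP [/forallP hO /forallP hg] ->.
  pose A := fun t => Apick S (tau t).
  have hA : forall t, A t \in unitmx /\ tau t = Timg S (A t) by move=> t; exact: Apick_spec (hO t).
  have hcore : forall t x, x \in U -> exists s x', [/\ s != t, x' \in U & x *m A t = x' *m A s].
    move=> t x /bigcupP [j _ hxj].
    have hy : x *m A t \in tau t j by rewrite (proj2 (hA t)) ffunE; apply: imset_f.
    have := hg (x *m A t); move=> /forallP /(_ t) /forallP /(_ j) /implyP /(_ hy).
    move=> /existsP [s /existsP [j' /andP [hne hin]]].
    move: hin; rewrite (proj2 (hA s)) ffunE => /imsetP [x' hx' he].
    case: (eqVneq s t) => [est | nst].
      subst s.
      have exx : x = x'.
        have := congr1 (fun y => y *m invmx (A t)) he; rewrite /= !mulmxK //; exact: (proj1 (hA t)).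
      subst x'.
      have jne : j' != j by apply: contraNneq hne => ->.
      by rewrite (disjointFr (Hdisj _ _ jne) hx') in hxj.
    exists s, x'; split => //; by apply/bigcupP; exists j'.
  have [Wv [hdim hin]] := core hcore.
  exists Wv; split => // -[t i]; rewrite ffunE; exact: hin.
apply: (leq_trans (G1 HG)).
rewrite card_prod !card_ord -expnD.
have -> : (m * (2 * d) + 2 * d * (4 * d) = 2 * d * m + 8 * d ^ 2)%N by lia.
by [].
Qed.

Theorem lemma13 (R : realFieldType) (L : finType) (eps p : L -> R)
  (Heps : forall l, 0 <= eps l <= 1 / 2) (Hinj : injective eps)
  (Hp : forall l, 0 < p l) (Hp1 : \sum_l p l = 1)
  (k : nat) (Hk : k = #|[set q : L * bool | 0 < nu eps p q]|)
  (X : nat -> L * bool -> R)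
  (HX0 : forall q, 0 < nu eps p q -> X 0%N q = 1)
  (Horth : forall i j, (i < k)%N -> (j < k)%N ->
     \sum_(q : L * bool) nu eps p q * X i q * X j q = (i == j)%:R)
  (m : nat) (Hm : (0 < m)%N)
  (S : {ffun 'I_k.-1 -> {set F2m m}})
  (Hdisj : forall i j, i != j -> [disjoint S i & S j]) :
  let d := span_dim (\bigcup_(j < k.-1) S j) in
  let B := \big[Num.max/0]_(i < k)
             \big[Num.max/0]_(q : L * bool | 0 < nu eps p q) `|X i q| in
  iid_expect eps p (fun w => X_orbit X S w ^+ 4)
    <= 2 ^+ (2 * d * m + 8 * d ^ 2) * B ^+ (2 ^ (d + 2)).
Proof.
cbv zeta. set d := span_dim _. set B := (\big[Num.max/0]_(i < k) _).
have nu_ge0 : forall q, 0 <= nu eps p q.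
  move=> [l b]; rewrite /nu /=; apply: mulr_ge0; first exact: ltW.
  have := Heps l => /andP [h1 h2]; case: b => //; rewrite subr_ge0 (le_trans h2) //; lra.
have nu_sum : \sum_(q : L * bool) nu eps p q = 1.
  rewrite -Hp1 -(pair_big xpredT xpredT (fun l b => nu eps p (l, b))) /=.
  apply: eq_bigr => l _; rewrite big_bool /nu /= -mulrDr.
  by rewrite addrC subrK mulr1.
have [l0 _] : exists l0 : L, true.
  case: (pickP (xpredT : pred L)) => [l0 _| h0]; first by exists l0.
  by move: Hp1; rewrite big_pred0 // => /eqP; rewrite eq_sym oner_eq0.
have nu0 : 0 < nu eps p (l0, false).
  rewrite /nu /=; apply: mulr_gt0 => //; rewrite subr_gt0.
  have := Heps l0 => /andP [_ h2]; apply: (le_lt_trans h2); lra.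
have k0 : (0 < k)%N.
  by rewrite Hk; apply/card_gt0P; exists (l0, false); rewrite inE.
have XB : forall i q, (i < k)%N -> 0 < nu eps p q -> `|X i q| <= B.
  move=> i q hi hq; rewrite /B.
  apply: le_trans (le_bigmax _ (fun i : 'I_k => \big[Num.max/0]_(q : L * bool | 0 < nu eps p q) `|X i q|) (Ordinal hi)).
  exact: (le_bigmax_cond _ _ hq).
have B1 : 1 <= B.
  by have := XB 0%N _ k0 nu0; rewrite HX0 // normr1.
set O := orbit_tuples S.
set C := B ^+ (2 ^ (d + 2)).
have C0 : 0 <= C by apply: exprn_ge0; apply: le_trans B1.
have E1 : forall w, X_orbit X S w ^+ 4 = \sum_(tau : {ffun 'I_4 -> {ffun 'I_k.-1 -> {set F2m m}}})
     \prod_(t < 4) ((tau t \in O)%:R * X_tuple X (tau t) w).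
  move=> w; rewrite -(bigA_distr_bigA (fun (t : 'I_4) (T : {ffun 'I_k.-1 -> {set F2m m}}) => (T \in O)%:R * X_tuple X T w)) /=.
  rewrite -(big_mkord xpredT (fun _ => \sum_j (j \in O)%:R * X_tuple X j w)) prodr_const_nat subn0.
  congr (_ ^+ _); rewrite /X_orbit big_mkcond /=; apply: eq_bigr => T _.
  by case: (T \in O); rewrite ?mul1r ?mul0r.
have E2 : iid_expect eps p (fun w => X_orbit X S w ^+ 4) =
   \sum_(tau : {ffun 'I_4 -> {ffun 'I_k.-1 -> {set F2m m}}})
     \sum_(w : {ffun F2m m -> L * bool}) (\prod_(x : F2m m) nu eps p (w x)) *
        \prod_(t < 4) ((tau t \in O)%:R * X_tuple X (tau t) w).
  rewrite /iid_expect exchange_big /=; apply: eq_bigr => w _.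
  by rewrite E1 mulr_sumr.
rewrite E2.
apply: (@le_trans _ _ (\sum_(tau : {ffun 'I_4 -> {ffun 'I_k.-1 -> {set F2m m}}}) (tau \in GoodSet S)%:R * C)).
  apply: ler_sum => tau _.
  case hO : [forall t, tau t \in O]; last first.
    move/negbT: hO => /forallPn [t ht].
    rewrite big1 ?mulr_ge0 //= => w _.
    by rewrite (bigD1 t) //= (negbTE ht) !mul0r mulr0.
  have hO' := hO; move/forallP: hO' => hO'.
  pose h (x : F2m m) (q : L * bool) := \prod_(t < 4) \prod_(j < k.-1) (if x \in tau t j then X j.+1 q else 1).
  have E4 : \sum_(w : {ffun F2m m -> L * bool}) (\prod_(x : F2m m) nu eps p (w x)) *
        \prod_(t < 4) ((tau t \in O)%:R * X_tuple X (tau t) w) =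
      \prod_(x : F2m m) \sum_(q : L * bool) nu eps p q * h x q.
    rewrite (bigA_distr_bigA (fun (x : F2m m) (q : L * bool) => nu eps p q * h x q)) /=.
    apply: eq_bigr => w _.
    rewrite [RHS]big_split; congr (_ * _).
    rewrite /h (eq_bigr (fun t => X_tuple X (tau t) w)); last by move=> t _; rewrite hO' mul1r.
    rewrite /X_tuple.
    under eq_bigr => t _ do under eq_bigr => j _ do rewrite big_mkcond /=.
    under eq_bigr => t _ do rewrite exchange_big /=.
    by rewrite exchange_big.
  rewrite E4.
  case hg : (goodb tau); last first.
    move/negbT: hg => /forallPn [x /forallPn [t /forallPn [j]]].
    rewrite negb_imply => /andP [hin /existsPn hno].
    have hj : (j.+1 < k)%N by have := ltn_ord j; lia.
    rewrite (bigD1 x) //=.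
    have -> : \sum_q nu eps p q * h x q = 0.
      rewrite -[RHS](_ : ((j.+1 == 0%N)%:R : R) = 0) // -(Horth j.+1 0%N hj k0).
      apply: eq_bigr => q _.
    move: (nu_ge0 q); rewrite le_eqVlt => /orP [/eqP <-|hq]; first by rewrite !mul0r.
    rewrite HX0 // mulr1 /h pair_big (bigD1 (t, j)) //= hin big1 ?mulr1 // => -[s j'] hne.
    have := hno s => /existsPn /(_ j'); rewrite hne /= => /negbTE -> //.
    by rewrite mul0r mulr_ge0 ?ler0n.
  rewrite inE hO hg /= mul1r.
  apply: le_trans (ler_norm _) _; rewrite normr_prod.
  pose hb (x : F2m m) := \prod_(t < 4) \prod_(j < k.-1) (if x \in tau t j then B else 1).
  apply: (@le_trans _ _ (\prod_x hb x)).
    apply: ler_prod => x _; rewrite normr_ge0 /=.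
    apply: le_trans (ler_norm_sum _ _ _) _.
    have -> : hb x = \sum_q nu eps p q * hb x by rewrite -mulr_suml nu_sum mul1r.
    apply: ler_sum => q _; rewrite normrM ger0_norm //.
    move: (nu_ge0 q); rewrite le_eqVlt => /orP [/eqP <-|hq]; first by rewrite !mul0r.
    apply: ler_wpM2l => //.
    rewrite /h normr_prod; apply: ler_prod => t _; rewrite normr_ge0 normr_prod /=.
    apply: ler_prod => j _; rewrite normr_ge0 /=.
    case: ifP => _; last by rewrite normr1.
    by apply: XB => //; have := ltn_ord j; lia.
  rewrite /hb exchange_big /=.
  under eq_bigr => t _ do rewrite exchange_big /=.
  under eq_bigr => t _ do under eq_bigr => j _ do rewrite -big_mkcond prodr_const.
  under eq_bigr => t _ do rewrite prodrXr.
  rewrite prodrXr /C; apply: ler_weXn2l => //.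
  have hU : (\sum_(j < k.-1) #|S j| <= 2 ^ d)%N.
    have e := partition_disjoint_bigcup addn (fun _ => 1%N) Hdisj.
    rewrite sum1_card in e.
    have e2 : (\sum_(j < k.-1) #|S j| = \sum_(j < k.-1) \sum_(x in S j) 1)%N.
      by apply: eq_bigr => j _; rewrite sum1_card.
    rewrite e2 -e.
    rewrite /d /span_dim; apply: card_vspace_le => x hx.
    by apply: memv_span; rewrite mem_enum.
  have ht : forall t : 'I_4, (\sum_(j < k.-1) #|tau t j| <= 2 ^ d)%N.
    move=> t; apply: leq_trans hU; apply: leq_sum => j _.
    by rewrite (proj2 (Apick_spec (hO' t))) ffunE leq_imset_card.
  apply: (@leq_trans (\sum_(t < 4) 2 ^ d)%N).
    by apply: leq_sum => t _; exact: ht t.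
  by rewrite sum_nat_const card_ord expnD mulnC.
rewrite -mulr_suml; apply: ler_wpM2r => //.
have -> : \sum_(tau : {ffun 'I_4 -> {ffun 'I_k.-1 -> {set F2m m}}}) (tau \in GoodSet S)%:R = (#|GoodSet S|%:R : R).
  rewrite -sumr_const [RHS]big_mkcond /=; apply: eq_bigr => tau _.
  by case: (tau \in _).
have := count_good Hdisj; rewrite -(ler_nat R) natrX => h.
exact: h.
Qed.
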